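(* Every normal uniform Kan complex $A$ has a normal connection $c:A^{\mathrm{I}}\to A^{\mathrm{I}\times\mathrm{I}}$.
   Context: Let $\mathbb{B}$ be the category of finite sets $[n]=\{\bot,x_1,\dots,x_n,\top\}$ ($n\ge0$, $\bot\ne\top$) and functions preserving $\bot,\top$; cartesian cubical sets are presheaves on $\mathbb{B}^{op}$. $\mathrm{I}^n$ is the representable on $[n]$, $\mathrm{I}^n\cong\mathrm{I}\times\dots\times\mathrm{I}$, $\mathrm{I}=\mathrm{I}^1$, $\mathrm{I}^0=1$; maps $\mathrm{I}^n\to X$ correspond to $n$-cubes of $X$. The two maps $[1]\to[0]$ give endpoints $0,1:1\to\mathrm{I}$. For $1\le i\le n$, $d\in\{0,1\}$, the face $\alpha_i^d:\mathrm{I}^{n-1}\to\mathrm{I}^n$ inserts $d$ in coordinate $i$; for $e\in\{0,1\}$ the open box $\sqcup^n_e\rightarrowtail\mathrm{I}^n$ is the union of the images of all faces $\alpha_i^d$ with $(i,d)\ne(1,e)$, with inclusion $i^n_e$. A uniform Kan complex is a cubical set $A$ with, for each $n\ge1$, $e\in\{0,1\}$, $k\ge1$ and $b:\mathrm{I}^k\times\sqcup^n_e\to A$, a chosen extension $\phi(b):\mathrm{I}^k\times\mathrm{I}^n\to A$ of $b$ along $1\times i^n_e$, with $\phi(b(\alpha\times1))=\phi(b)(\alpha\times1)$ for all $\alpha:\mathrm{I}^j\to\mathrm{I}^k$ ($j\ge1$). It is normal if for all $n\ge0$, $e$, $k\ge1$ and $c:\mathrm{I}^k\times\mathrm{I}^n\to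 A$, with $\pi:\mathrm{I}^{n+1}\to\mathrm{I}^n$ forgetting the first coordinate, $\phi(c(1\times\pi)(1\times i^{n+1}_e))=c(1\times\pi)$. A connection on $X$ is a map of cubical sets $c:X^{\mathrm{I}}\to X^{\mathrm{I}\times\mathrm{I}}$ such that for every $n$-cube $a:\mathrm{I}^n\times\mathrm{I}\to X$ of $X^{\mathrm{I}}$, with $a_0=a(1\times0)$, the map $c(a):\mathrm{I}^n\times\mathrm{I}\times\mathrm{I}\to X$ (coordinates $(u,s,t)$) restricts on $s=1$ to $a$ and on $s=0$ and on $t=0$ to the constant path at $a_0$. It is normal if $c(x\circ\mathrm{pr})=x\circ\mathrm{pr}'$ for every $n$-cube $x:\mathrm{I}^n\to X$, where $\mathrm{pr}:\mathrm{I}^n\times\mathrm{I}\to\mathrm{I}^n$ and $\mathrm{pr}':\mathrm{I}^n\times\mathrm{I}\times\mathrm{I}\to\mathrm{I}^n$ are projections (i.e. $c$ sends constant paths to doubly degenerate squares). *)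

(* Defs.v *)
From Stdlib Require Import FunctionalExtensionality ProofIrrelevance.
From HB Require Import structures.
From mathcomp Require Import all_boot.

Set Implicit Arguments.
Unset Strict Implicit.
Unset Printing Implicit Defensive.

(* [n] = {bot, x_1, ..., x_n, top} is encoded as 'I_(n+2), with         *)
(* bot = 0, x_j = j, top = n+1.                                         *)

Definition Pt (n : nat) := 'I_n.+2.
Definition ptbot (n : nat) : Pt n := ord0.
Definition pttop (n : nat) : Pt n := ord_max.

Definition Bmor (n m : nat) :=
  {f : {ffun Pt n -> Pt m} | (f (ptbot n) == ptbot m) && (f (pttop n) == pttop m)}.

Definition bfun n m (f : Bmor n m) : Pt n -> Pt m := fun j => sval f j.

Lemma mkB_proof n m (f : Pt n -> Pt m) :
  f (ptbot n) = ptbot m -> f (pttop n) = pttop m ->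
  ((finfun f) (ptbot n) == ptbot m) && ((finfun f) (pttop n) == pttop m).
Proof. by move=> h1 h2; rewrite !ffunE h1 h2 !eqxx. Qed.

Definition mkB n m (f : Pt n -> Pt m) (h1 : f (ptbot n) = ptbot m)
  (h2 : f (pttop n) = pttop m) : Bmor n m :=
  exist _ (finfun f) (mkB_proof h1 h2).

Lemma bfun_bot n m (f : Bmor n m) : bfun f (ptbot n) = ptbot m.
Proof. by have /andP [/eqP h _] := svalP f; exact: h. Qed.

Lemma bfun_top n m (f : Bmor n m) : bfun f (pttop n) = pttop m.
Proof. by have /andP [_ /eqP h] := svalP f; exact: h. Qed.

Lemma bfun_mkB n m (f : Pt n -> Pt m) h1 h2 j : bfun (@mkB n m f h1 h2) j = f j.
Proof. by rewrite /bfun /= ffunE. Qed.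

Lemma Bmor_ext n m (f g : Bmor n m) : (forall j, bfun f j = bfun g j) -> f = g.
Proof. by move=> h; apply: val_inj; apply/ffunP => j; exact: h. Qed.

Definition idB n : Bmor n n := @mkB n n id erefl erefl.

Lemma compB_bot n m p (g : Bmor m p) (f : Bmor n m) :
  (bfun g \o bfun f) (ptbot n) = ptbot p.
Proof. by rewrite /= !bfun_bot. Qed.

Lemma compB_top n m p (g : Bmor m p) (f : Bmor n m) :
  (bfun g \o bfun f) (pttop n) = pttop p.
Proof. by rewrite /= !bfun_top. Qed.

Definition compB n m p (g : Bmor m p) (f : Bmor n m) : Bmor n p :=
  mkB (compB_bot g f) (compB_top g f).

Lemma compB1 n m (f : Bmor n m) : compB (idB m) f = f.
Proof. by apply: Bmor_ext => j; rewrite !bfun_mkB /= bfun_mkB. Qed.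

Lemma comp1B n m (f : Bmor n m) : compB f (idB n) = f.
Proof. by apply: Bmor_ext => j; rewrite !bfun_mkB /= bfun_mkB. Qed.

Lemma compBA n m p q (h : Bmor p q) (g : Bmor m p) (f : Bmor n m) :
  compB h (compB g f) = compB (compB h g) f.
Proof. by apply: Bmor_ext => j; rewrite !bfun_mkB /= !bfun_mkB. Qed.

(* Cartesian cubical sets = presheaves on B^op = functors B -> Type.    *)
(* cob X n is the set of n-cubes X([n]).                                *)

Record cset := CSet {
  cob : nat -> Type;
  cact : forall n m, Bmor n m -> cob n -> cob m;
  cact_id : forall n x, cact (idB n) x = x;
  cact_comp : forall n m p (f : Bmor n m) (g : Bmor m p) x,
      cact (compB g f) x = cact g (cact f x)
}.
Arguments cact {c n m}.

Record cmap (X Y : cset) := CMap {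
  cfun : forall n, cob X n -> cob Y n;
  cnat : forall n m (f : Bmor n m) x, cfun (cact f x) = cact f (cfun x)
}.
Arguments cfun {X Y} c {n}.

Lemma cmap_ext X Y (f g : cmap X Y) :
  (forall n x, @cfun _ _ f n x = @cfun _ _ g n x) -> f = g.
Proof.
case: f g => f fN [g gN] /= H.
have E : f = g.
  by apply: functional_extensionality_dep => n; apply: functional_extensionality.
subst g; by rewrite (proof_irrelevance _ fN gN).
Qed.

Definition cid X : cmap X X := @CMap X X (fun n x => x) (fun _ _ _ _ => erefl).

Lemma ccomp_nat X Y Z (g : cmap Y Z) (f : cmap X Y) n m (h : Bmor n m) x :
  cfun g (cfun f (cact h x)) = cact h (cfun g (cfun f x)).
Proof. by rewrite !cnat. Qed.

Definition ccomp X Y Z (g : cmap Y Z) (f : cmap X Y) : cmap X Z :=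
  CMap (ccomp_nat g f).

Definition yo (n : nat) : cset :=
  @CSet (fun m => Bmor n m) (fun m p (g : Bmor m p) (h : Bmor n m) => compB g h)
        (fun m h => compB1 h) (fun m p q f g h => esym (compBA g f h)).

Lemma ymap_nat n m (g : Bmor n m) p q (f : Bmor p q) (h : Bmor m p) :
  compB (compB f h) g = compB f (compB h g).
Proof. by rewrite compBA. Qed.

Definition ymap n m (g : Bmor n m) : cmap (yo m) (yo n) :=
  @CMap (yo m) (yo n) (fun p (h : Bmor m p) => compB h g) (ymap_nat g).

Lemma zeroB_bot m :
  (fun j : Pt 0 => if val j == 0 then ptbot m else pttop m) (ptbot 0) = ptbot m.
Proof. by []. Qed.
Lemma zeroB_top m :
  (fun j : Pt 0 => if val j == 0 then ptbot m else pttop m) (pttop 0) = pttop m.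
Proof. by []. Qed.
Definition zeroB m : Bmor 0 m := mkB (zeroB_bot m) (zeroB_top m).

Lemma zeroB_uniq m (f : Bmor 0 m) : f = zeroB m.
Proof.
apply: Bmor_ext => j; rewrite bfun_mkB.
case: j => [[|[|//]] Hj] /=.
  by rewrite -(bfun_bot f); congr bfun; apply: val_inj.
by rewrite -(bfun_top f); congr bfun; apply: val_inj.
Qed.

Lemma cbang_nat X n m (f : Bmor n m) (x : cob X n) :
  zeroB m = compB f (zeroB n).
Proof. by rewrite (zeroB_uniq (compB f (zeroB n))). Qed.

Definition cbang X : cmap X (yo 0) :=
  @CMap X (yo 0) (fun n _ => zeroB n) (@cbang_nat X).

Definition cprod (X Y : cset) : cset :=
  @CSet (fun n => (cob X n * cob Y n)%type)
        (fun n m f xy => (cact f xy.1, cact f xy.2))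
        (fun n xy => ltac:(by case: xy => x y; rewrite /= !cact_id))
        (fun n m p f g xy => ltac:(by case: xy => x y; rewrite /= !cact_comp)).

Definition cfst X Y : cmap (cprod X Y) X :=
  @CMap (cprod X Y) X (fun n xy => xy.1) (fun _ _ _ _ => erefl).
Definition csnd X Y : cmap (cprod X Y) Y :=
  @CMap (cprod X Y) Y (fun n xy => xy.2) (fun _ _ _ _ => erefl).

Lemma cpair_nat Z X Y (f : cmap Z X) (g : cmap Z Y) n m (h : Bmor n m) z :
  (cfun f (cact h z), cfun g (cact h z)) =
  @cact (cprod X Y) _ _ h (cfun f z, cfun g z).
Proof. by rewrite /= !cnat. Qed.

Definition cpair Z X Y (f : cmap Z X) (g : cmap Z Y) : cmap Z (cprod X Y) :=
  @CMap Z (cprod X Y) (fun n z => (cfun f z, cfun g z)) (cpair_nat f g).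

Definition cprodmap X Y X' Y' (f : cmap X X') (g : cmap Y Y') :
  cmap (cprod X Y) (cprod X' Y') :=
  cpair (ccomp f (cfst X Y)) (ccomp g (csnd X Y)).

Section Sub.
Variables (X : cset) (P : forall n, cob X n -> Prop)
          (HP : forall n m (f : Bmor n m) (x : cob X n), P x -> P (cact f x)).

Lemma sig_ext T (Q : T -> Prop) (a b : {x | Q x}) : sval a = sval b -> a = b.
Proof.
case: a b => a Ha [b Hb] /= E; subst b; by rewrite (proof_irrelevance _ Ha Hb).
Qed.

Definition csub_act n m (f : Bmor n m) (x : {x : cob X n | P x}) :
  {x : cob X m | P x} := exist _ (cact f (sval x)) (HP f (svalP x)).

Definition csub : cset :=
  @CSet (fun n => {x : cob X n | P x}) csub_act
        (fun n x => @sig_ext _ _ (csub_act (idB n) x) x (cact_id (sval x)))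
        (fun n m p f g x => @sig_ext _ _ (csub_act (compB g f) x) (csub_act g (csub_act f x)) (cact_comp f g (sval x))).

Definition cincl : cmap csub X :=
  @CMap csub X (fun n x => sval x) (fun _ _ _ _ => erefl).
End Sub.

(* For i : 'I_n.+1 (coordinate i+1 in 1-based numbering, 1 <= i+1 <= n+1)
   and d : bool (false = 0, true = 1), the B-morphism [n+1] -> [n]
   sending x_(i+1) to d (bot for 0, top for 1) and the other x_j's in order
   to x_1..x_n.  It induces the face alpha_(i+1)^d : I^n -> I^(n+1). *)
Definition faceF n (i : 'I_n.+1) (d : bool) (j : Pt n.+1) : Pt n :=
  if val j == i.+1 then (if d then pttop n else ptbot n)
  else if val j < i.+1 then inord (val j) else inord (val j).-1.

Lemma faceF_bot n i d : @faceF n i d (ptbot n.+1) = ptbot n.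
Proof. by apply: val_inj; rewrite /faceF /= inordK. Qed.

Lemma faceF_top n i d : @faceF n i d (pttop n.+1) = pttop n.
Proof.
have Hi := ltn_ord i.
rewrite /faceF /=.
have -> : (n.+2 == i.+1) = false.
  by apply/eqP => -[E]; rewrite -E ltnn in Hi.
have -> : (n.+2 < i.+1) = false by rewrite ltnS ltnNge ltnW.
by apply: val_inj; rewrite /= inordK.
Qed.

Definition faceB n (i : 'I_n.+1) (d : bool) : Bmor n.+1 n :=
  mkB (faceF_bot i d) (faceF_top i d).

Definition face n (i : 'I_n.+1) (d : bool) : cmap (yo n) (yo n.+1) :=
  ymap (faceB i d).

(* the open box  sqcup^(n+1)_e  as a sub-presheaf of I^(n+1): the union of
   the images of all faces alpha_i^d with (i,d) <> (1,e). *)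
Definition boxP n (e : bool) m (x : cob (yo n.+1) m) : Prop :=
  exists (i : 'I_n.+1) (d : bool), ((i != ord0) || (d != e)) /\
    exists y : cob (yo n) m, cfun (face i d) y = x.

Lemma boxP_closed n e m p (f : Bmor m p) (x : cob (yo n.+1) m) :
  boxP e x -> boxP e (cact f x).
Proof.
case=> i [d [H [y <-]]]; exists i, d; split=> //.
by exists (cact f y); rewrite cnat.
Qed.

Definition box n e : cset := csub (@boxP_closed n e).

Definition boxincl n e : cmap (box n e) (yo n.+1) := cincl (@boxP_closed n e).

(* the B-morphism [n] -> [n+1], x_j |-> x_(j+1); it induces the projection
   pi : I^(n+1) -> I^n forgetting the first coordinate *)
Definition piF n (j : Pt n) : Pt n.+1 :=
  if val j == 0 then ptbot n.+1 else inord (val j).+1.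

Lemma piF_bot n : piF (ptbot n) = ptbot n.+1. Proof. by []. Qed.
Lemma piF_top n : piF (pttop n) = pttop n.+1.
Proof. by apply: val_inj; rewrite /piF /= inordK. Qed.

Definition piB n : Bmor n n.+1 := mkB (@piF_bot n) (@piF_top n).
Definition cpi n : cmap (yo n.+1) (yo n) := ymap (piB n).

(* endpoints 0, 1 : 1 -> I, induced by the two maps [1] -> [0]
   (x_1 |-> bot gives 0, x_1 |-> top gives 1) *)
Definition endF (d : bool) (j : Pt 1) : Pt 0 :=
  if val j == 0 then ptbot 0 else if val j == 2 then pttop 0
  else if d then pttop 0 else ptbot 0.
Lemma endF_bot d : endF d (ptbot 1) = ptbot 0. Proof. by []. Qed.
Lemma endF_top d : endF d (pttop 1) = pttop 0. Proof. by []. Qed.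
Definition endB d : Bmor 1 0 := mkB (endF_bot d) (endF_top d).
Definition cend (d : bool) : cmap (yo 0) (yo 1) := ymap (endB d).

(* For n >= 1, k >= 1 (written n.+1, k.+1), b : I^k x sqcup^n_e -> A,
   a chosen extension kfill b : I^k x I^n -> A along 1 x i^n_e,
   uniform in I^k. *)
Record ukan (A : cset) := UKan {
  kfill : forall (n : nat) (e : bool) (k : nat),
      cmap (cprod (yo k.+1) (box n e)) A -> cmap (cprod (yo k.+1) (yo n.+1)) A;
  kfill_ext : forall n e k (b : cmap (cprod (yo k.+1) (box n e)) A),
      ccomp (kfill b) (cprodmap (cid (yo k.+1)) (boxincl n e)) = b;
  kfill_unif : forall n e k j (a : cmap (yo j.+1) (yo k.+1))
      (b : cmap (cprod (yo k.+1) (box n e)) A),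
      kfill (ccomp b (cprodmap a (cid (box n e))))
      = ccomp (kfill b) (cprodmap a (cid (yo n.+1)))
}.
Arguments kfill {A} u {n e k}.

Definition normal_ukan (A : cset) (K : ukan A) : Prop :=
  forall (n : nat) (e : bool) (k : nat) (c : cmap (cprod (yo k.+1) (yo n)) A),
    kfill K (ccomp (ccomp c (cprodmap (cid (yo k.+1)) (cpi n)))
                   (cprodmap (cid (yo k.+1)) (boxincl n e)))
    = ccomp c (cprodmap (cid (yo k.+1)) (cpi n)).

Definition cexp_act (X Z : cset) n m (f : Bmor n m)
  (a : cmap (cprod (yo n) Z) X) : cmap (cprod (yo m) Z) X :=
  ccomp a (cprodmap (ymap f) (cid Z)).

Lemma cexp_act_id X Z n a : @cexp_act X Z n n (idB n) a = a.
Proof. by apply: cmap_ext => p [h z]; rewrite /= comp1B. Qed.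

Lemma cexp_act_comp X Z n m p (f : Bmor n m) (g : Bmor m p) a :
  @cexp_act X Z n p (compB g f) a = cexp_act g (cexp_act f a).
Proof. by apply: cmap_ext => q [h z]; rewrite /= compBA. Qed.

Definition cexp (X Z : cset) : cset :=
  @CSet (fun n => cmap (cprod (yo n) Z) X) (@cexp_act X Z)
        (@cexp_act_id X Z) (@cexp_act_comp X Z).

Definition I := yo 1.

(* For a : I^n x I -> X, a_0 = a(1 x 0) : I^n (= I^n x 1) -> X *)
Definition cstart X n (a : cmap (cprod (yo n) I) X) : cmap (yo n) X :=
  ccomp a (cpair (cid (yo n)) (ccomp (cend false) (cbang (yo n)))).

(* I^n x I -> I^n x (I x I),  (u, t) |-> (u, (d, t)) *)
Definition at_s n (d : bool) : cmap (cprod (yo n) I) (cprod (yo n) (cprod I I)) :=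
  cpair (cfst _ _) (cpair (ccomp (cend d) (cbang _)) (csnd _ _)).

(* I^n x I -> I^n x (I x I),  (u, s) |-> (u, (s, 0)) *)
Definition at_t0 n : cmap (cprod (yo n) I) (cprod (yo n) (cprod I I)) :=
  cpair (cfst _ _) (cpair (csnd _ _) (ccomp (cend false) (cbang _))).

Definition is_connection (X : cset) (c : cmap (cexp X I) (cexp X (cprod I I))) : Prop :=
  forall (n : nat) (a : cmap (cprod (yo n) I) X),
    ccomp (cfun c a) (at_s n true) = a /\
    ccomp (cfun c a) (at_s n false) = ccomp (cstart a) (cfst (yo n) I) /\
    ccomp (cfun c a) (at_t0 n) = ccomp (cstart a) (cfst (yo n) I).

Definition normal_connection (X : cset) (c : cmap (cexp X I) (cexp X (cprod I I))) : Prop :=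
  forall (n : nat) (x : cmap (yo n) X),
    cfun c (ccomp x (cfst (yo n) I)) = ccomp x (cfst (yo n) (cprod I I)).

(* Main.v *)
Require Import Defs.
From mathcomp Require Import all_boot zify.
Set Implicit Arguments. Unset Strict Implicit. Unset Printing Implicit Defensive.

Definition x1 : Pt 1 := @Ordinal 3 1 erefl.
Definition p1 : Pt 2 := @Ordinal 4 1 erefl.
Definition p2 : Pt 2 := @Ordinal 4 2 erefl.

Lemma B1_ext m (f g : Bmor 1 m) : bfun f x1 = bfun g x1 -> f = g.
Proof.
move=> H; apply: Bmor_ext => j; case: j => [[|[|[|//]]] Hj].
- by rewrite (_ : Ordinal Hj = ptbot 1) ?bfun_bot //; apply: val_inj.
- by rewrite (_ : Ordinal Hj = x1) //; apply: val_inj.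
- by rewrite (_ : Ordinal Hj = pttop 1) ?bfun_top //; apply: val_inj.
Qed.

Lemma B2_ext m (f g : Bmor 2 m) : bfun f p1 = bfun g p1 -> bfun f p2 = bfun g p2 -> f = g.
Proof.
move=> H H'; apply: Bmor_ext => j; case: j => [[|[|[|[|//]]]] Hj].
- by rewrite (_ : Ordinal Hj = ptbot 2) ?bfun_bot //; apply: val_inj.
- by rewrite (_ : Ordinal Hj = p1) //; apply: val_inj.
- by rewrite (_ : Ordinal Hj = p2) //; apply: val_inj.
- by rewrite (_ : Ordinal Hj = pttop 2) ?bfun_top //; apply: val_inj.
Qed.

Lemma bfun_compB n m p (g : Bmor m p) (f : Bmor n m) j : bfun (compB g f) j = bfun g (bfun f j).
Proof. by rewrite /compB bfun_mkB. Qed.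

Definition ebot m : Bmor 1 m := compB (zeroB m) (endB false).
Definition etop m : Bmor 1 m := compB (zeroB m) (endB true).
Lemma ebot_nat m p (f : Bmor m p) : compB f (ebot m) = ebot p.
Proof. by rewrite /ebot compBA; congr compB; apply: zeroB_uniq. Qed.
Lemma ebot_x1 m : bfun (ebot m) x1 = ptbot m.
Proof. by rewrite /ebot /compB bfun_mkB /= /zeroB /endB !bfun_mkB. Qed.
Lemma etop_x1 m : bfun (etop m) x1 = pttop m.
Proof. by rewrite /etop /compB bfun_mkB /= /zeroB /endB !bfun_mkB. Qed.

Definition wF m (s t : Bmor 1 m) (j : Pt 2) : Pt m :=
  if val j == 0 then ptbot m else if val j == 1 then bfun t x1
  else if val j == 2 then bfun s x1 else pttop m.
Lemma wF_bot m s t : @wF m s t (ptbot 2) = ptbot m. Proof. by []. Qed.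
Lemma wF_top m s t : @wF m s t (pttop 2) = pttop m. Proof. by []. Qed.
Definition wB m s t : Bmor 2 m := mkB (@wF_bot m s t) (@wF_top m s t).
Lemma wB_p1 m s t : bfun (@wB m s t) p1 = bfun t x1. Proof. by rewrite bfun_mkB. Qed.
Lemma wB_p2 m s t : bfun (@wB m s t) p2 = bfun s x1. Proof. by rewrite bfun_mkB. Qed.
Lemma wB_nat m p (f : Bmor m p) s t : compB f (wB s t) = wB (compB f s) (compB f t).
Proof. by apply: B2_ext; rewrite !bfun_compB ?wB_p1 ?wB_p2 !bfun_compB. Qed.

Definition j1F (j : Pt 1) : Pt 2 :=
  if val j == 0 then ptbot 2 else if val j == 1 then p1 else pttop 2.
Lemma j1F_bot : j1F (ptbot 1) = ptbot 2. Proof. by []. Qed.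
Lemma j1F_top : j1F (pttop 1) = pttop 2. Proof. by []. Qed.
Definition j1B : Bmor 1 2 := mkB j1F_bot j1F_top.
Lemma wB_j1 m s t : compB (@wB m s t) j1B = t.
Proof. by apply: B1_ext; rewrite bfun_compB (_ : bfun j1B x1 = p1) ?wB_p1 // bfun_mkB. Qed.

Definition inclF n (j : Pt n) : Pt n.+1 :=
  if val j <= n then inord (val j) else pttop n.+1.
Lemma inclF_bot n : inclF (ptbot n) = ptbot n.+1.
Proof. by apply: val_inj; rewrite /inclF /= inordK. Qed.
Lemma inclF_top n : inclF (pttop n) = pttop n.+1.
Proof. by rewrite /inclF /= ltnn. Qed.
Definition inclB n : Bmor n n.+1 := mkB (@inclF_bot n) (@inclF_top n).

Definition ext0F n m (u : Bmor n m) (j : Pt n.+1) : Pt m :=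
  if val j <= n then bfun u (inord (val j)) else if val j == n.+1 then ptbot m else pttop m.
Lemma ext0F_bot n m u : @ext0F n m u (ptbot n.+1) = ptbot m.
Proof. rewrite /ext0F /= (_ : inord 0 = ptbot n) ?bfun_bot //. by apply: val_inj; rewrite /= inordK. Qed.
Lemma ext0F_top n m u : @ext0F n m u (pttop n.+1) = pttop m.
Proof. rewrite /ext0F /=. have -> : (n.+2 <= n) = false by lia. by have -> : (n.+2 == n.+1) = false by lia. Qed.
Definition ext0 n m u : Bmor n.+1 m := mkB (@ext0F_bot n m u) (@ext0F_top n m u).

Lemma ext0_nat n m p (f : Bmor m p) (u : Bmor n m) : compB f (ext0 u) = ext0 (compB f u).
Proof.
apply: Bmor_ext => j; rewrite bfun_compB !bfun_mkB /ext0F.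
case: ifP => _ /=; first by rewrite bfun_compB.
by case: ifP => _; rewrite ?bfun_bot ?bfun_top.
Qed.

Lemma ext0_incl n m (u : Bmor n m) : compB (ext0 u) (inclB n) = u.
Proof.
apply: Bmor_ext => j; rewrite bfun_compB !bfun_mkB /inclF.
case: j => j Hj /=; case: leqP => H.
  rewrite /ext0F /= inordK; last by lia.
  rewrite H; congr bfun; apply: val_inj; rewrite /= inordK //.
have E : j = n.+1 by lia.
rewrite (_ : Ordinal Hj = pttop n); last by apply: val_inj; rewrite /= E.
rewrite /ext0F /= ifF; last by lia.
by rewrite ifF ?bfun_top //; lia.
Qed.

Lemma ext0_inclF n m (u : Bmor n m) k : bfun (ext0 u) (inclF k) = bfun u k.
Proof. by rewrite -{2}(ext0_incl u) bfun_compB /inclB bfun_mkB. Qed.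

Definition liftF n m (f : Bmor n m) (j : Pt n.+1) : Pt m.+1 :=
  if val j <= n then inclF (bfun f (inord (val j)))
  else if val j == n.+1 then inord m.+1 else pttop m.+1.
Lemma liftF_bot n m f : @liftF n m f (ptbot n.+1) = ptbot m.+1.
Proof.
rewrite /liftF /= (_ : inord 0 = ptbot n) ?bfun_bot ?inclF_bot //.
by apply: val_inj; rewrite /= inordK.
Qed.
Lemma liftF_top n m f : @liftF n m f (pttop n.+1) = pttop m.+1.
Proof. by rewrite /liftF /= ifF; [rewrite ifF //|]; lia. Qed.
Definition liftB n m f : Bmor n.+1 m.+1 := mkB (@liftF_bot n m f) (@liftF_top n m f).

Lemma lift_incl n m (f : Bmor n m) : compB (liftB f) (inclB n) = compB (inclB m) f.
Proof.
apply: Bmor_ext => j; rewrite !bfun_compB !bfun_mkB /inclF.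
case: j => j Hj /=; case: leqP => H.
  rewrite /liftF /= inordK; last by lia.
  rewrite H; congr inclF; congr bfun; apply: val_inj; rewrite /= inordK //.
have E : j = n.+1 by lia.
rewrite (_ : Ordinal Hj = pttop n); last by apply: val_inj; rewrite /= E.
by rewrite bfun_top liftF_top /= ltnn.
Qed.

Lemma ext0_lift n m p (f : Bmor n m) (u : Bmor m p) :
  compB (ext0 u) (liftB f) = ext0 (compB u f).
Proof.
apply: Bmor_ext => j; rewrite bfun_compB /liftB bfun_mkB /liftF.
case: ifP => H; first by rewrite ext0_inclF /ext0 bfun_mkB /ext0F H bfun_compB.
rewrite /ext0 !bfun_mkB /ext0F H.
case: eqP => E /=.
  by rewrite inordK // ifF ?eqxx //; lia.
by rewrite ifF ?ifF //; lia.
Qed.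

Lemma box_cases m (x : Bmor 2 m) : boxP true x ->
  [\/ bfun x p2 = pttop m, bfun x p2 = ptbot m | bfun x p1 = ptbot m].
Proof.
case=> i [d [Hid [y <-]]]; rewrite /= !bfun_compB /faceB !bfun_mkB /faceF /=.
case: i Hid => [[|[|//]] Hi] /=; case: d => //= _.
- by apply: Or33; rewrite bfun_bot.
- by apply: Or31; rewrite bfun_top.
- by apply: Or32; rewrite bfun_bot.
Qed.

Lemma bot_top_neq m : (ptbot m == pttop m) = false.
Proof. by []. Qed.

Definition bfn (A : cset) n (a : cmap (cprod (yo n) I) A) m
  (vx : cob (cprod (yo n.+1) (box 1 true)) m) : cob A m :=
  if bfun (sval vx.2) p2 == pttop m
  then @cfun _ _ a m (compB vx.1 (inclB n), compB (sval vx.2) j1B)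
  else @cfun _ _ a m (compB vx.1 (inclB n), ebot m).

Lemma bfn_nat A n a m p (f : Bmor m p) vx :
  @bfn A n a p (cact f vx) = cact f (@bfn A n a m vx).
Proof.
case: vx => v [x Hx]; rewrite /bfn /= bfun_compB.
case: (boolP (bfun x p2 == pttop m)) => E.
  rewrite (eqP E) bfun_top eqxx -cnat /=.
  by rewrite !compBA.
case: ifP => E2; last by rewrite -cnat /= compBA ebot_nat.
have H1 : bfun x p1 = ptbot m.
  case: (box_cases Hx) => // H; first by rewrite H eqxx in E.
  by rewrite H bfun_bot bot_top_neq in E2.
rewrite -cnat /= compBA ebot_nat; congr (cfun a (_, _)).
apply: B1_ext; rewrite ebot_x1 !bfun_compB (_ : bfun j1B x1 = p1) ?H1 ?bfun_bot //.
by rewrite /j1B bfun_mkB.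
Qed.

Definition bmap A n (a : cmap (cprod (yo n) I) A) : cmap (cprod (yo n.+1) (box 1 true)) A :=
  CMap (@bfn_nat A n a).

Definition cF A (K : ukan A) n (a : cmap (cprod (yo n) I) A) m
  (p : cob (cprod (yo n) (cprod I I)) m) : cob A m :=
  @cfun _ _ (kfill K (bmap a)) m (ext0 p.1, wB p.2.1 p.2.2).

Lemma cF_nat A K n a m p (f : Bmor m p) x :
  @cF A K n a p (cact f x) = cact f (@cF A K n a m x).
Proof. by case: x => u [s t]; rewrite /cF -cnat /= ext0_nat wB_nat. Qed.

Definition ca A K n a : cmap (cprod (yo n) (cprod I I)) A := CMap (@cF_nat A K n a).

Lemma bmap_act A n m (f : Bmor n m) (a : cmap (cprod (yo n) I) A) :
  bmap (cexp_act f a) = ccomp (bmap a) (cprodmap (ymap (liftB f)) (cid (box 1 true))).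
Proof.
apply: cmap_ext => p [v [x Hx]]; rewrite /= /bfn /=.
by rewrite -!compBA lift_incl.
Qed.

Lemma ca_nat A K n m (f : Bmor n m) (a : cob (cexp A I) n) :
  @ca A K m (cact f a) = @cact (cexp A (cprod I I)) _ _ f (@ca A K n a).
Proof.
apply: cmap_ext => p [u [s t]].
rewrite /= /cF /= bmap_act (kfill_unif K) /=.
by rewrite ext0_lift.
Qed.

Definition conn A K : cmap (cexp A I) (cexp A (cprod I I)) := @CMap (cexp A I) (cexp A (cprod I I)) (fun n a => @ca A K n a) (@ca_nat A K).

Lemma fill_box A (K : ukan A) n a m (v : Bmor n.+1 m) (x : Bmor 2 m) (H : boxP true x) :
  @cfun _ _ (kfill K (bmap a)) m (v, x) = @bfn A n a m (v, exist _ x H).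
Proof.
have E := kfill_ext K (bmap a).
have := congr1 (fun F : cmap (cprod (yo n.+1) (box 1 true)) A =>
   @cfun _ _ F m ((v, exist _ x H) : cob (cprod (yo n.+1) (box 1 true)) m)) E.
move=> /= ->. by [].
Qed.

Lemma box_s m (d : bool) (t : Bmor 1 m) :
  boxP true (wB (compB (zeroB m) (endB d)) t).
Proof.
exists (@Ordinal 2 1 erefl), d; split => //; exists t.
apply: B2_ext; rewrite /= bfun_compB /faceB bfun_mkB /faceF /= ?wB_p1 ?wB_p2.
  by congr bfun; apply: val_inj; rewrite /= inordK.
rewrite !bfun_compB /zeroB /endB !bfun_mkB /endF /=.
by case: d; rewrite ?bfun_top ?bfun_bot.
Qed.

Lemma box_t m (s : Bmor 1 m) : boxP true (wB s (ebot m)).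
Proof.
exists ord0, false; split => //; exists s.
apply: B2_ext; rewrite /= bfun_compB /faceB bfun_mkB /faceF /= ?wB_p1 ?wB_p2.
  by rewrite ebot_x1 bfun_bot.
by congr bfun; apply: val_inj; rewrite /= inordK.
Qed.

Lemma conn_is A K : is_connection (@conn A K).
Proof.
move=> n a; split; [|split]; apply: cmap_ext => m [u t] /=; rewrite /cF /=.
- rewrite (@fill_box A K n a m _ _ (box_s true t)) /bfn /=.
  by rewrite wB_p2 etop_x1 eqxx ext0_incl wB_j1.
- rewrite (@fill_box A K n a m _ _ (box_s false t)) /bfn /=.
  by rewrite wB_p2 ebot_x1 bot_top_neq ext0_incl.
- rewrite (@fill_box A K n a m _ _ (box_t t)) /bfn /= ext0_incl wB_j1.
  by case: ifP.
Qed.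

Lemma bmap_const A n (x : cmap (yo n) A) :
  bmap (ccomp x (cfst (yo n) I)) =
  ccomp (ccomp (ccomp x (ccomp (ymap (inclB n)) (cfst (yo n.+1) (yo 1))))
               (cprodmap (cid (yo n.+1)) (cpi 1)))
        (cprodmap (cid (yo n.+1)) (boxincl 1 true)).
Proof. by apply: cmap_ext => p [v [w Hw]]; rewrite /= /bfn; case: ifP. Qed.

Lemma conn_normal A K : normal_ukan K -> normal_connection (@conn A K).
Proof.
move=> HK n x; apply: cmap_ext => m [u [s t]] /=; rewrite /cF.
by rewrite bmap_const HK /= ext0_incl.
Qed.

Theorem lemma3p11 (A : cset) (K : ukan A) :
  normal_ukan K ->
  exists c : cmap (cexp A I) (cexp A (cprod I I)),
    is_connection c /\ normal_connection c.
Proof. by move=> HK; exists (conn K); split; [exact: conn_is | exact: conn_normal]. Qed.
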